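(* Let $n,a,b,Z$ be positive integers with $\max\{a,b\}\le n\le a+b$, let $\Psi\in\mathbb{R}^{n\times n}$ be a positive semidefinite matrix, and let $K^{(3)}\in\mathbb{R}^{m_3\times n}$, $K^{(4)}\in\mathbb{R}^{m_4\times n}$. Then there exist integers $\tilde n,\tilde a,\tilde b$ with $\max\{\tilde a,\tilde b\}\le\tilde n\le\tilde a+\tilde b$, a positive semidefinite matrix $\tilde\Psi\in\mathbb{R}^{\tilde n\times\tilde n}$ with $\operatorname{rank}(\tilde\Psi)=\tilde n$, and matrices $\tilde K^{(3)}\in\mathbb{R}^{m_3\times\tilde n}$, $\tilde K^{(4)}\in\mathbb{R}^{m_4\times\tilde n}$, such that the problems $\mathrm{TaskAwareCoding}(n,\Psi,a,b,Z,K^{(3)},K^{(4)})$ and $\mathrm{TaskAwareCoding}(\tilde n,\tilde\Psi,\tilde a,\tilde b,Z,\tilde K^{(3)},\tilde K^{(4)})$ have equal optimal overall task losses, and an optimal coding scheme for either of the two problems can be transformed linearly (by multiplying its encoding and decoding matrices by fixed matrices) into an optimal coding scheme for the other.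
   Context: Problem $\mathrm{TaskAwareCoding}(n,\Psi,a,b,Z,K^{(3)},K^{(4)})$ (task-aware linear network coding over the butterfly network): let $x=(x_1,\dots,x_n)^\top$ be a real random vector with $\mathbb{E}[x]=0$ and covariance $\mathbb{E}[xx^\top]=\Psi$, and let $x^{(1)}=(x_1,\dots,x_a)^\top$, $x^{(2)}=(x_{n-b+1},\dots,x_n)^\top$. A coding scheme consists of matrices $E^{(1,3)},E^{(1,5)}\in\mathbb{R}^{Z\times a}$, $E^{(2,4)},E^{(2,5)}\in\mathbb{R}^{Z\times b}$, $E^{(5,6)}\in\mathbb{R}^{Z\times 2Z}$, $D^{(3)},D^{(4)}\in\mathbb{R}^{n\times 2Z}$. Set $\phi^{(1,3)}=E^{(1,3)}x^{(1)}$, $\phi^{(1,5)}=E^{(1,5)}x^{(1)}$, $\phi^{(2,4)}=E^{(2,4)}x^{(2)}$, $\phi^{(2,5)}=E^{(2,5)}x^{(2)}$, $\phi^{(5,6)}=E^{(5,6)}\begin{bmatrix}\phi^{(1,5)}\\ \phi^{(2,5)}\end{bmatrix}$, and reconstructions $\hat x^{(3)}=D^{(3)}\begin{bmatrix}\phi^{(1,3)}\\ \phi^{(5,6)}\end{bmatrix}$, $\hat x^{(4)}=D^{(4)}\begin{bmatrix}\phi^{(2,4)}\\ \phi^{(5,6)}\end{bmatrix}$. The overall task loss is $\mathcal{L}_{\text{total}}=\sum_{i\in\{3,4\}}\mathbb{E}\|K^{(i)}x-K^{(i)}\hat x^{(i)}\|_2^2$, which depends on the distribution of $x$ only through $\Psi$.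 The problem is to minimize $\mathcal{L}_{\text{total}}$ over all coding schemes; its optimal overall task loss is the minimum value, and an optimal coding scheme is a minimizer. *)

(* Defs.v *)
From HB Require Import structures.
From mathcomp Require Import all_boot all_order all_algebra.
From mathcomp Require Import classical_sets reals.
Set Implicit Arguments. Unset Strict Implicit. Unset Printing Implicit Defensive.
Import Order.TTheory GRing.Theory Num.Theory.
Local Open Scope ring_scope.
Local Open Scope classical_set_scope.

Definition psd (R : realType) (n : nat) (A : 'M[R]_n) : Prop :=
  A^T = A /\ forall v : 'cV[R]_n, 0 <= (v^T *m A *m v) 0 0.

Definition sel1 (R : realType) (a n : nat) : 'M[R]_(a, n) :=
  \matrix_(i < a, j < n) ((j : nat) == (i : nat))%:R.
Definition sel2 (R : realType) (b n : nat) : 'M[R]_(b, n) :=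
  \matrix_(i < b, j < n) ((j : nat) == (n - b + i)%N)%:R.

(* a coding scheme for the butterfly network *)
Record scheme (R : realType) (n a b Z : nat) := Scheme {
  E13 : 'M[R]_(Z, a); E15 : 'M[R]_(Z, a);
  E24 : 'M[R]_(Z, b); E25 : 'M[R]_(Z, b);
  E56 : 'M[R]_(Z, Z + Z);
  D3 : 'M[R]_(n, Z + Z); D4 : 'M[R]_(n, Z + Z) }.

Section Loss.
Variables (R : realType) (n a b Z m3 m4 : nat).
Variables (Psi : 'M[R]_n) (K3 : 'M[R]_(m3, n)) (K4 : 'M[R]_(m4, n)).

Definition map56 (s : scheme R n a b Z) : 'M[R]_(Z, n) :=
  E56 s *m col_mx (E15 s *m sel1 R a n) (E25 s *m sel2 R b n).
(* received vectors at nodes 3 and 4 as linear maps of x *)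
Definition map3 (s : scheme R n a b Z) : 'M[R]_(Z + Z, n) :=
  col_mx (E13 s *m sel1 R a n) (map56 s).
Definition map4 (s : scheme R n a b Z) : 'M[R]_(Z + Z, n) :=
  col_mx (E24 s *m sel2 R b n) (map56 s).

(* E||K x - K xhat||^2 = tr(A Psi A^T) with A = K (I - D M), since E[x x^T] = Psi *)
Definition task_err (m : nat) (K : 'M[R]_(m, n)) (A : 'M[R]_n) : R :=
  let B := K *m (1%:M - A) in \tr (B *m Psi *m B^T).

Definition total_loss (s : scheme R n a b Z) : R :=
  task_err K3 (D3 s *m map3 s) + task_err K4 (D4 s *m map4 s).

Definition opt_loss : R := inf [set total_loss s | s in [set: scheme R n a b Z]].

Definition is_optimal (s : scheme R n a b Z) : Prop :=
  forall s' : scheme R n a b Z, total_loss s <= total_loss s'.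
End Loss.

Definition transform (R : realType) (n a b n' a' b' Z : nat)
  (P1 : 'M[R]_(a, a')) (P2 : 'M[R]_(b, b')) (Q3 Q4 : 'M[R]_(n', n))
  (s : scheme R n a b Z) : scheme R n' a' b' Z :=
  Scheme (E13 s *m P1) (E15 s *m P1) (E24 s *m P2) (E25 s *m P2) (E56 s)
         (Q3 *m D3 s) (Q4 *m D4 s).

Definition linear_transfer (R : realType) (Z m3 m4 : nat)
  (n a b : nat) (Psi : 'M[R]_n) (K3 : 'M[R]_(m3, n)) (K4 : 'M[R]_(m4, n))
  (n' a' b' : nat) (Psi' : 'M[R]_n') (K3' : 'M[R]_(m3, n')) (K4' : 'M[R]_(m4, n')) : Prop :=
  exists (P1 : 'M[R]_(a, a')) (P2 : 'M[R]_(b, b')) (Q3 Q4 : 'M[R]_(n', n)),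
    forall s : scheme R n a b Z,
      is_optimal Psi K3 K4 s ->
      is_optimal Psi' K3' K4' (transform P1 P2 Q3 Q4 s).
Arguments linear_transfer {R} Z {m3 m4 n} a b Psi K3 K4 {n'} a' b' Psi' K3' K4'.
Arguments opt_loss {R n} a b Z {m3 m4} Psi K3 K4.

(* Main.v *)
Require Import Defs.
From HB Require Import structures.
From mathcomp Require Import all_boot all_order all_algebra.
From mathcomp Require Import classical_sets reals.
From mathcomp Require Import ring lra zify.
Import Order.TTheory GRing.Theory Num.Theory.
Local Open Scope ring_scope.

Set Implicit Arguments. Unset Strict Implicit. Unset Printing Implicit Defensive.

Section Aux.
Variable R : realType.

Lemma sumsq_eq0 k (y : 'cV[R]_k) : (y^T *m y) 0 0 = 0 -> y = 0.
Proof.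
rewrite mxE => /eqP; rewrite psumr_eq0 => [/allP H|i _]; last first.
  by rewrite mxE -expr2 sqr_ge0.
apply/matrixP => i j; rewrite (ord1 j) mxE.
have := H i (mem_index_enum _); rewrite mxE -expr2 sqrf_eq0 => /eqP ->//.
Qed.

Lemma sumsq_ge0 k (y : 'cV[R]_k) : 0 <= (y^T *m y) 0 0.
Proof. by rewrite mxE sumr_ge0 // => i _; rewrite mxE -expr2 sqr_ge0. Qed.

Lemma psd_quad0 k (Psi : 'M[R]_k) (w : 'cV[R]_k) :
  psd Psi -> (w^T *m Psi *m w) 0 0 = 0 -> Psi *m w = 0.
Proof.
move=> [Hs Hq] H0; set y := Psi *m w.
set c := (y^T *m y) 0 0; set d := (y^T *m Psi *m y) 0 0.
have c0 : 0 <= c by apply: sumsq_ge0.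
have d0 : 0 <= d by apply: Hq.
have cross : (w^T *m Psi *m y) 0 0 = c.
  by rewrite /c /y trmx_mul Hs !mulmxA.
have cross2 : (y^T *m Psi *m w) 0 0 = c.
  by rewrite /c /y -mulmxA.
suff : c = 0 by apply: sumsq_eq0.
apply/eqP; rewrite eq_le c0 andbT; apply/negP => /negP; rewrite -ltNge => cpos.
pose s := c / (d + 1).
have hs : s * (d + 1) = c by rewrite /s mulfVK // gt_eqF // ltr_wpDl.
have E : (w - s*:y)^T *m Psi *m (w - s*:y) = w^T*m Psi*m w - s*:(w^T*m Psi*m y) - s*:(y^T *m Psi *m w) + (s*s)*:(y^T*m Psi*m y).
  have -> : (w - s*:y)^T = w^T - s*:y^T by apply/matrixP=> i j; rewrite !mxE.
  rewrite !mulmxBl !mulmxBr -!scalemxAl !scalemxAr scalerA.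
  by rewrite opprB addrA addrAC.
have := Hq (w - s *: y); rewrite E.
move: H0 cross cross2; rewrite -/d.
set A1 := w^T *m Psi *m w; set A2 := w^T *m Psi *m y; set A3 := y^T *m Psi *m w.
set A4 := y^T *m Psi *m y.
have -> : (A1 - s*:A2 - s*:A3 + (s*s)*:A4) 0 0 = A1 0 0 - s * A2 0 0 - s * A3 0 0 + s*s*A4 0 0 by rewrite !mxE.
move=> -> -> -> h; rewrite -/d in h.
have sp : 0 < s by rewrite divr_gt0 // ltr_wpDl.
clear E; move: s hs sp h => s hs sp h; move: c d hs cpos h d0 c0 => c d hs cpos h d0 c0.
have hd : s * s * d = s * c - s * s by rewrite -hs; ring.
have eq1 : s * (- c - s) = 0 - s * c - s * c + s * s * d by rewrite hd; ring.
have : 0 <= s * (- c - s) by rewrite eq1.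
rewrite pmulr_rge0 // => h2; have : 0 < c + s by rewrite addr_gt0.
by rewrite -(opprK (c + s)) oppr_gt0 opprD ltNge h2.
Qed.

Lemma tr_psd_ge0 k m (P : 'M[R]_k) (W : 'M[R]_(m, k)) :
  psd P -> 0 <= \tr (W *m P *m W^T).
Proof.
move=> [_ Hq]; rewrite /mxtrace sumr_ge0 // => i _.
have := Hq (row i W)^T; rewrite trmxK.
have -> : (W *m P *m W^T) i i = (row i W *m P *m (row i W)^T) 0 0.
  by rewrite -row_mul !mxE; apply: eq_bigr => j _; rewrite !mxE.
by [].
Qed.

Lemma free_from_ker m k (M : 'M[R]_(m, k)) :
  (forall v : 'rV[R]_m, v *m M = 0 -> v = 0) -> row_free M.
Proof.
move=> H; rewrite -kermx_eq0 -submx0; apply/row_subP => i.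
rewrite (H (row i (kermx M))) ?sub0mx //.
by apply/sub_kermxP; rewrite (submx_trans (row_sub _ _)) // sub_kermx mulmx_ker.
Qed.

Lemma gram_unit m k (C : 'M[R]_(m, k)) : row_free C -> C *m C^T \in unitmx.
Proof.
move=> fC; rewrite -row_free_unit; apply: free_from_ker => v Hv.
have h : ((v *m C)^T^T *m (v *m C)^T) 0 0 = 0.
  by rewrite trmxK trmx_mul mulmxA -(mulmxA v) Hv mul0mx mxE.
have := sumsq_eq0 h => /(congr1 trmx); rewrite trmxK trmx0 => h2.
by apply: (row_free_inj fC); rewrite h2 mul0mx.
Qed.

Lemma proj_ineq m k (P : 'M[R]_m) (X Y : 'M[R]_(m, k)) (Ps : 'M[R]_k) :
  psd Ps -> P^T = P -> P *m P = P -> P *m X = X ->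
  \tr ((X - P *m Y) *m Ps *m (X - P *m Y)^T) <= \tr ((X - Y) *m Ps *m (X - Y)^T).
Proof.
move=> hPs PT PP PX.
have e1 : X - P *m Y = P *m (X - Y) by rewrite mulmxBr PX.
rewrite e1; move: (X - Y) => Zm.
pose N := 1%:M - P.
have eZ : Zm = P *m Zm + N *m Zm by rewrite -mulmxDl /N addrC subrK mul1mx.
have NT : N^T = N by rewrite /N linearB /= trmx1 PT.
have PN : P *m N = 0 by rewrite /N mulmxBr mulmx1 PP subrr.
have NP : N *m P = 0 by rewrite /N mulmxBl mul1mx PP subrr.
clearbody N.
have c1 : \tr (P *m Zm *m Ps *m (N *m Zm)^T) = 0.
  by rewrite trmx_mul NT !mulmxA mxtrace_mulC !mulmxA NP !mul0mx mxtrace0.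
have c2 : \tr (N *m Zm *m Ps *m (P *m Zm)^T) = 0.
  by rewrite trmx_mul PT !mulmxA mxtrace_mulC !mulmxA PN !mul0mx mxtrace0.
rewrite [in X in _ <= X]eZ linearD /= !mulmxDl !mulmxDr !mxtraceD c1 c2 add0r addr0.
by rewrite lerDl; apply: tr_psd_ge0 hPs.
Qed.

Local Open Scope classical_set_scope.
Lemma inf_le_dom (T1 T2 : Type) (f : T1 -> R) (g : T2 -> R) :
  (forall x, 0 <= f x) -> T2 ->
  (forall y, exists x, f x <= g y) ->
  inf [set f x | x in [set: T1]] <= inf [set g y | y in [set: T2]].
Proof.
move=> f0 y0 H; apply: lb_le_inf; first by exists (g y0), y0.
move=> _ [y _ <-]; have [x hx] := H y; apply: le_trans hx.
apply: ge_inf; last by exists x.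
by exists 0 => _ [z _ <-].
Qed.

Local Close Scope classical_set_scope.

Lemma proj_exists m n nt (K : 'M[R]_(m, n)) (T : 'M[R]_(n, nt)) :
  exists (Q : 'M[R]_(nt, n)) (P : 'M[R]_m),
    [/\ P^T = P, P *m P = P, P *m (K *m T) = K *m T & (K *m T) *m Q = P *m K].
Proof.
move: (K *m T) => X.
have [r [C [fC sC sX]]] : exists r (C : 'M[R]_(r, m)),
    [/\ row_free C, (C <= X^T)%MS & (X^T <= C)%MS].
  by exists (\rank X^T), (row_base X^T); rewrite row_base_free !eq_row_base.
pose G := C *m C^T.
have uG : G \in unitmx by apply: gram_unit.
have GT : G^T = G by rewrite /G trmx_mul (trmxK C).
have eG : C *m C^T = G by [].
clearbody G.
pose H := C *m pinvmx X^T.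
have eH : H *m X^T = C by apply: mulmxKpV.
pose J := X^T *m pinvmx C.
have eJ : J *m C = X^T by apply: mulmxKpV.
clearbody H J.
pose P := C^T *m invmx G *m C.
exists (H^T *m invmx G *m C *m K), P; split.
- by rewrite /P !trmx_mul trmxK trmx_inv GT mulmxA.
- rewrite /P -!mulmxA; congr (_ *m _).
  by rewrite (mulmxA C) eG (mulmxA G) mulmxV // mul1mx.
- by rewrite -[X]trmxK -eJ (trmx_mul J C) /P -!mulmxA (mulmxA C) eG (mulmxA (invmx G)) mulVmx // mul1mx.
- by rewrite /P !mulmxA -[X in X *m H^T]trmxK -trmx_mul eH.
Qed.

Lemma map_tr n a b n' a' b' Z k (P1 : 'M[R]_(a, a')) (P2 : 'M[R]_(b, b'))
  (Q3 Q4 : 'M[R]_(n', n)) (s : scheme R n a b Z) (T1 : 'M[R]_(n', k)) (T2 : 'M[R]_(n, k)) :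
  P1 *m sel1 R a' n' *m T1 = sel1 R a n *m T2 ->
  P2 *m sel2 R b' n' *m T1 = sel2 R b n *m T2 ->
  map3 (transform P1 P2 Q3 Q4 s) *m T1 = map3 s *m T2 /\
  map4 (transform P1 P2 Q3 Q4 s) *m T1 = map4 s *m T2.
Proof.
move=> h1 h2.
have e56 : map56 (transform P1 P2 Q3 Q4 s) *m T1 = map56 s *m T2.
  rewrite /map56 /= -!mulmxA !mul_col_mx -!mulmxA (mulmxA P1) h1 (mulmxA P2) h2.
  by rewrite !mulmxA.
rewrite /map3 /map4 !mul_col_mx e56 /= -!mulmxA (mulmxA P1) h1 (mulmxA P2) h2.
by [].
Qed.

Lemma task_fwd n nt m k (Psi : 'M[R]_n) (Psit : 'M[R]_nt) (T : 'M[R]_(n, nt))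
  (K : 'M[R]_(m, n)) (D : 'M[R]_(n, k)) (M : 'M[R]_(k, n)) (Q : 'M[R]_(nt, n)) (P : 'M[R]_m) :
  psd Psit -> Psi = T *m Psit *m T^T ->
  P^T = P -> P *m P = P -> P *m (K *m T) = K *m T -> (K *m T) *m Q = P *m K ->
  task_err Psit (K *m T) (Q *m D *m (M *m T)) <= task_err Psi K (D *m M).
Proof.
move=> hP eP PT PP PX XQ; rewrite /task_err eP.
set B := K *m (1%:M - D *m M).
have -> : B *m (T *m Psit *m T^T) *m B^T = (B *m T) *m Psit *m (B *m T)^T.
  by rewrite (trmx_mul B T) !mulmxA.
have -> : B *m T = K *m T - K *m D *m M *m T.
  by rewrite /B mulmxBr mulmx1 mulmxBl !mulmxA.
have -> : K *m T *m (1%:M - Q *m D *m (M *m T)) = K *m T - P *m (K *m D *m M *m T).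
  by rewrite mulmxBr mulmx1 !mulmxA XQ -!mulmxA.
exact: proj_ineq.
Qed.

Lemma task_bwd n nt m k (Psi : 'M[R]_n) (Psit : 'M[R]_nt) (T : 'M[R]_(n, nt))
  (K : 'M[R]_(m, n)) (D : 'M[R]_(nt, k)) (M : 'M[R]_(k, n)) (Mt : 'M[R]_(k, nt)) :
  Psi = T *m Psit *m T^T -> M *m T = Mt ->
  task_err Psi K (T *m D *m M) = task_err Psit (K *m T) (D *m Mt).
Proof.
move=> eP eM; rewrite /task_err eP.
set B := K *m (1%:M - T *m D *m M).
have -> : B *m (T *m Psit *m T^T) *m B^T = (B *m T) *m Psit *m (B *m T)^T.
  by rewrite (trmx_mul B T) !mulmxA.
congr (\tr (_ *m _ *m _^T)); rewrite /B mulmxBr mulmx1 mulmxBl mulmxBr mulmx1 -eM !mulmxA //.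
Qed.

Lemma total_ge0 n a b Z m3 m4 (Psi : 'M[R]_n) (K3 : 'M[R]_(m3, n)) (K4 : 'M[R]_(m4, n))
  (s : scheme R n a b Z) : psd Psi -> 0 <= total_loss Psi K3 K4 s.
Proof. by move=> hP; rewrite /total_loss /task_err addr_ge0 // tr_psd_ge0. Qed.

Lemma reduction n a b nt ta tb Z m3 m4 (Psi : 'M[R]_n) (Psit : 'M[R]_nt)
  (K3 : 'M[R]_(m3, n)) (K4 : 'M[R]_(m4, n)) (T : 'M[R]_(n, nt))
  (A1 : 'M[R]_(a, ta)) (C1 : 'M[R]_(ta, a)) (A2 : 'M[R]_(b, tb)) (C2 : 'M[R]_(tb, b)) :
  psd Psi -> psd Psit -> Psi = T *m Psit *m T^T ->
  A1 *m sel1 R ta nt = sel1 R a n *m T -> C1 *m sel1 R a n *m T = sel1 R ta nt ->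
  A2 *m sel2 R tb nt = sel2 R b n *m T -> C2 *m sel2 R b n *m T = sel2 R tb nt ->
  [/\ opt_loss a b Z Psi K3 K4 = opt_loss ta tb Z Psit (K3 *m T) (K4 *m T),
      linear_transfer Z a b Psi K3 K4 ta tb Psit (K3 *m T) (K4 *m T)
    & linear_transfer Z ta tb Psit (K3 *m T) (K4 *m T) a b Psi K3 K4].
Proof.
move=> hP hPt eP hA1 hC1 hA2 hC2.
have [Q3 [P3 [P3T P3P P3X XQ3]]] := proj_exists K3 T.
have [Q4 [P4 [P4T P4P P4X XQ4]]] := proj_exists K4 T.
pose F (s : scheme R n a b Z) := transform A1 A2 Q3 Q4 s.
pose G (s : scheme R nt ta tb Z) := transform C1 C2 T T s.
have Ffwd : forall s, total_loss Psit (K3 *m T) (K4 *m T) (F s) <= total_loss Psi K3 K4 s.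
  move=> s.
  move: (map_tr (P1:=A1) (P2:=A2) Q3 Q4 s (T1:=1%:M) (T2:=T)); rewrite !mulmx1 => /(_ hA1 hA2) [e3 e4].
  rewrite /total_loss /F e3 e4 (_ : D3 (transform A1 A2 Q3 Q4 s) = Q3 *m D3 s) // (_ : D4 (transform A1 A2 Q3 Q4 s) = Q4 *m D4 s) //.
  by apply: lerD; [apply: (task_fwd _ _ hPt eP P3T P3P P3X XQ3) | apply: (task_fwd _ _ hPt eP P4T P4P P4X XQ4)].
have Gbwd : forall st, total_loss Psi K3 K4 (G st) = total_loss Psit (K3 *m T) (K4 *m T) st.
  move=> st.
  move: (map_tr (P1:=C1) (P2:=C2) T T st (T1:=T) (T2:=1%:M)); rewrite !mulmx1 => /(_ hC1 hC2) [e3 e4].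
  rewrite /total_loss /G (_ : D3 (transform C1 C2 T T st) = T *m D3 st) // (_ : D4 (transform C1 C2 T T st) = T *m D4 st) //.
  by rewrite (task_bwd K3 (D3 st) eP e3) (task_bwd K4 (D4 st) eP e4).
have s0 : scheme R n a b Z by exact: (Scheme 0 0 0 0 0 0 0).
have st0 : scheme R nt ta tb Z by exact: (Scheme 0 0 0 0 0 0 0).
split.
- apply/eqP; rewrite eq_le; apply/andP; split.
    apply: inf_le_dom => //; first by move=> s; exact: total_ge0.
    by move=> st; exists (G st); rewrite Gbwd.
  apply: inf_le_dom => //; first by move=> s; exact: total_ge0.
  by move=> s; exists (F s); exact: Ffwd.
- exists A1, A2, Q3, Q4 => s hs st'.
  apply: (le_trans (Ffwd s)); rewrite -Gbwd; exact: hs.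
- exists C1, C2, T, T => st hst s'.
  rewrite -/(G st) Gbwd; apply: le_trans (hst (F s')) (Ffwd s').
Qed.
End Aux.

Section Sel.
Variable R : realType.

Lemma sel1_blk p q : sel1 R p (p + q) = row_mx 1%:M 0.
Proof.
apply/matrixP => i j; rewrite !mxE; case: splitP => k hk; rewrite !mxE hk.
  by rewrite eq_sym.
have := ltn_ord i; case: eqP => // <-; lia.
Qed.

Lemma sel2_blk p q r :
  sel2 R (q + r) ((p + q) + r) = block_mx (row_mx (0 : 'M_(q, p)) 1%:M) 0 0 1%:M.
Proof.
apply/matrixP => i j; rewrite !mxE.
have hsub : (p + q + r - (q + r) = p)%N by lia.
rewrite hsub.
case: (splitP i) => i' hi; rewrite !mxE; case: (splitP j) => j' hj; rewrite !mxE.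
- case: (splitP j') => k hk; rewrite !mxE.
    by case: eqP => //; rewrite hj hk hi; have := ltn_ord k; lia.
  by rewrite hj hk hi eqn_add2l eq_sym.
- by case: eqP => //; rewrite hj hi; have := ltn_ord i'; lia.
- by case: eqP => //; rewrite hj hi; have := ltn_ord j'; lia.
- by rewrite hj hi -addnA !eqn_add2l eq_sym.
Qed.

Lemma row1_sel1 a n (i : 'I_n) (hia : (i < a)%N) :
  row i (1%:M : 'M[R]_n) = row (Ordinal hia) (sel1 R a n).
Proof. by apply/matrixP => z j; rewrite !mxE eq_sym. Qed.

Lemma row1_sel2 a b n (i : 'I_n) (hn : (n <= a + b)%N) (hia : (a <= i)%N)
  (hk : (i - (n - b) < b)%N) :
  row i (1%:M : 'M[R]_n) = row (Ordinal hk) (sel2 R b n).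
Proof.
apply/matrixP => z j; rewrite !mxE /=; congr ((_ : bool)%:R).
have e : (n - b + (i - (n - b)) = i)%N by lia.
by rewrite e eq_sym.
Qed.

Lemma row_sel1_sub a b n (k : 'I_a) :
  (row k (sel1 R a n) <= col_mx (sel1 R a n) (sel2 R b n))%MS.
Proof.
apply: submx_trans (row_sub _ _) _.
by have := addsmxSl (sel1 R a n) (sel2 R b n); rewrite addsmxE.
Qed.

Lemma row_sel2_sub a b n (k : 'I_b) :
  (row k (sel2 R b n) <= col_mx (sel1 R a n) (sel2 R b n))%MS.
Proof.
apply: submx_trans (row_sub _ _) _.
by have := addsmxSr (sel1 R a n) (sel2 R b n); rewrite addsmxE.
Qed.

Lemma sel_full a b n : (n <= a + b)%N -> (b <= n)%N ->
  ((1%:M : 'M[R]_n) <= col_mx (sel1 R a n) (sel2 R b n))%MS.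
Proof.
move=> hn hb; apply/row_subP => i.
case: (ltnP i a) => hia.
  rewrite (row1_sel1 hia); exact: row_sel1_sub.
have hk : (i - (n - b) < b)%N by have := ltn_ord i; lia.
rewrite (row1_sel2 hn hia hk); exact: row_sel2_sub.
Qed.
End Sel.

Lemma basis_split (F : fieldType) n m1 m2 (U1 : 'M[F]_(m1, n)) (U2 : 'M[F]_(m2, n)) :
  exists rU rW rV (U' : 'M[F]_(rU, n)) (W' : 'M[F]_(rW, n)) (V' : 'M[F]_(rV, n)),
  [/\ (col_mx U' W' :=: U1)%MS, (col_mx W' V' :=: U2)%MS
    & row_free (col_mx (col_mx U' W') V')].
Proof.
exists (\rank (U1 :\: U2))%MS, (\rank (U1 :&: U2))%MS, (\rank (U2 :\: U1))%MS.
exists (row_base (U1 :\: U2))%MS, (row_base (U1 :&: U2))%MS, (row_base (U2 :\: U1))%MS.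
have eU1 : (col_mx (row_base (U1 :\: U2)%MS) (row_base (U1 :&: U2)%MS) :=: U1)%MS.
  apply: eqmx_trans (eqmx_sym (addsmxE _ _)) _.
  apply: eqmx_trans (adds_eqmx (eq_row_base _) (eq_row_base _)) _.
  exact: addsmx_diff_cap_eq.
have eU2 : (col_mx (row_base (U1 :&: U2)%MS) (row_base (U2 :\: U1)%MS) :=: U2)%MS.
  apply: eqmx_trans (eqmx_sym (addsmxE _ _)) _.
  apply: eqmx_trans (adds_eqmx (eq_row_base _) (eq_row_base _)) _.
  rewrite addsmxC capmxC; exact: addsmx_diff_cap_eq.
split => //.
set U' := row_base (U1 :\: U2)%MS; set W' := row_base (U1 :&: U2)%MS; set V' := row_base (U2 :\: U1)%MS.
set B := col_mx _ _.
have sXB : (col_mx U' W' <= B)%MS by have := addsmxSl (col_mx U' W') V'; rewrite addsmxE.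
have sVB : (V' <= B)%MS by have := addsmxSr (col_mx U' W') V'; rewrite addsmxE.
have hB : (B == U1 + U2)%MS.
  apply/andP; split.
    rewrite col_mx_sub eU1 addsmxSl /=.
    by rewrite eq_row_base (submx_trans (diffmxSl _ _)) // addsmxSr.
  rewrite addsmx_sub; apply/andP; split.
    by rewrite -eU1.
  rewrite -eU2 col_mx_sub; apply/andP; split.
    by apply: submx_trans sXB; have := addsmxSr U' W'; rewrite addsmxE.
  by [].
rewrite /row_free (eqmx_rank hB).
have h1 := mxrank_sum_cap U1 U2.
have h2 := mxrank_cap_compl U1 U2.
have h3 := mxrank_cap_compl U2 U1.
rewrite capmxC in h3.
apply/eqP; lia.
Qed.

Unset Implicit Arguments. Set Strict Implicit.

Theorem theorem1 (R : realType) (n a b Z m3 m4 : nat) (Psi : 'M[R]_n)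
  (K3 : 'M[R]_(m3, n)) (K4 : 'M[R]_(m4, n)) :
  (0 < n)%N -> (0 < a)%N -> (0 < b)%N -> (0 < Z)%N ->
  (maxn a b <= n)%N -> (n <= a + b)%N -> psd Psi ->
  exists (nt na_t nb_t : nat) (Psit : 'M[R]_nt)
         (K3t : 'M[R]_(m3, nt)) (K4t : 'M[R]_(m4, nt)),
    [/\ (maxn na_t nb_t <= nt)%N /\ (nt <= na_t + nb_t)%N,
        psd Psit /\ \rank Psit = nt,
        opt_loss a b Z Psi K3 K4 = opt_loss na_t nb_t Z Psit K3t K4t,
        linear_transfer Z a b Psi K3 K4 na_t nb_t Psit K3t K4t
      & linear_transfer Z na_t nb_t Psit K3t K4t a b Psi K3 K4].
Proof.
move=> _ _ _ _ hmax hn hP.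
have hb : (b <= n)%N by move: hmax; rewrite geq_max => /andP[].
have [rU [rW [rV [U' [W' [V' [eU1 eU2 fB]]]]]]] :=
  basis_split (sel1 R a n *m Psi) (sel2 R b n *m Psi).
set B := col_mx (col_mx U' W') V'.
have sXB : (col_mx U' W' <= B)%MS by have := addsmxSl (col_mx U' W') V'; rewrite addsmxE.
have sVB : (V' <= B)%MS by have := addsmxSr (col_mx U' W') V'; rewrite addsmxE.
have sVX : (V' <= col_mx W' V')%MS by have := addsmxSr W' V'; rewrite addsmxE.
have sWX : (W' <= col_mx U' W')%MS by have := addsmxSr U' W'; rewrite addsmxE.
have hBP : (B <= Psi)%MS.
  rewrite col_mx_sub eU1 submxMl /=.
  by apply: submx_trans sVX _; rewrite eU2 submxMl.
have hPB : (Psi <= B)%MS.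
  have := submxMr Psi (sel_full R hn hb); rewrite mul1mx mul_col_mx => h.
  apply: submx_trans h _; rewrite col_mx_sub -eU1 sXB /= -eU2 col_mx_sub sVB andbT.
  exact: submx_trans sWX sXB.
pose Cb := B *m pinvmx Psi.
have eCb : Cb *m Psi = B by apply: mulmxKpV.
pose T := Psi *m pinvmx B.
have eT : T *m B = Psi by apply: mulmxKpV.
clearbody Cb T.
pose Psit := Cb *m Psi *m Cb^T.
have [PsiT Psiq] := hP.
have ePsi : Psi = T *m Psit *m T^T.
  rewrite /Psit !mulmxA -(mulmxA T) eCb eT.
  by rewrite -{2}PsiT -trmx_mul -trmx_mul eCb eT PsiT.
have s1B : sel1 R (rU + rW) ((rU + rW) + rV) *m B = col_mx U' W'.
  by rewrite sel1_blk mul_row_col mul1mx mul0mx addr0.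
have s2B : sel2 R (rW + rV) ((rU + rW) + rV) *m B = col_mx W' V'.
  rewrite sel2_blk mul_block_col mul_row_col !mul0mx !mul1mx !add0r addr0.
  by [].
pose A1 := (sel1 R a n *m Psi) *m pinvmx (col_mx U' W').
have eA1 : A1 *m col_mx U' W' = sel1 R a n *m Psi by apply: mulmxKpV; rewrite eU1.
pose C1 := col_mx U' W' *m pinvmx (sel1 R a n *m Psi).
have eC1 : C1 *m (sel1 R a n *m Psi) = col_mx U' W' by apply: mulmxKpV; rewrite eU1.
pose A2 := (sel2 R b n *m Psi) *m pinvmx (col_mx W' V').
have eA2 : A2 *m col_mx W' V' = sel2 R b n *m Psi by apply: mulmxKpV; rewrite eU2.
pose C2 := col_mx W' V' *m pinvmx (sel2 R b n *m Psi).
have eC2 : C2 *m (sel2 R b n *m Psi) = col_mx W' V' by apply: mulmxKpV; rewrite eU2.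
clearbody A1 C1 A2 C2.
have hA1 : A1 *m sel1 R (rU + rW) ((rU + rW) + rV) = sel1 R a n *m T.
  by apply: (row_free_inj fB); rewrite -!mulmxA s1B eA1 eT.
have hA2 : A2 *m sel2 R (rW + rV) ((rU + rW) + rV) = sel2 R b n *m T.
  by apply: (row_free_inj fB); rewrite -!mulmxA s2B eA2 eT.
have hC1 : C1 *m sel1 R a n *m T = sel1 R (rU + rW) ((rU + rW) + rV).
  by apply: (row_free_inj fB); rewrite s1B -!mulmxA eT eC1.
have hC2 : C2 *m sel2 R b n *m T = sel2 R (rW + rV) ((rU + rW) + rV).
  by apply: (row_free_inj fB); rewrite s2B -!mulmxA eT eC2.
have hPt : psd Psit.
  split; first by rewrite /Psit !trmx_mul trmxK PsiT mulmxA.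
  move=> v; have := Psiq (Cb^T *m v).
  by rewrite /Psit trmx_mul trmxK !mulmxA.
have rPt : \rank Psit = ((rU + rW) + rV)%N.
  apply/eqP; apply: free_from_ker => v hv.
  have h0 : ((Cb^T *m v^T)^T *m Psi *m (Cb^T *m v^T)) 0 0 = 0.
    rewrite trmx_mul !trmxK !mulmxA (_ : v *m Cb *m Psi *m Cb^T = v *m Psit); last by rewrite /Psit !mulmxA.
    by rewrite hv mul0mx mxE.
  have := psd_quad0 hP h0 => /(congr1 trmx).
  rewrite !trmx_mul !trmxK PsiT trmx0 -mulmxA eCb => hvB.
  by apply: (row_free_inj fB); rewrite hvB mul0mx.
have [h1 h2 h3] := reduction Z K3 K4 hP hPt ePsi hA1 hC1 hA2 hC2.
exists ((rU + rW) + rV)%N, (rU + rW)%N, (rW + rV)%N, Psit, (K3 *m T), (K4 *m T).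
split => //; split => //; lia.
Qed.
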